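(* The matrix $B^*_0$ is positive definite, i.e. all its eigenvalues are strictly positive.
   Context: Fix integers $d,M\ge1$. The activation $\sigma:\mathbb R\to\mathbb R$ is differentiable, non-polynomial, bounded and Lipschitz, with $\sigma'$ bounded and Lipschitz. The points $x^1,\dots,x^M\in\mathbb R^d$ are nonzero, bounded, and the lines $\{\xi x^m:\xi\in\mathbb R\}$ pairwise meet only at the origin. $\mu_0$ is a probability measure on $\mathbb R\times\mathbb R^d\times\mathbb R$ (variables $(c,w,\eta)$) under which $c$ is independent of $(w,\eta)$, $c$ is mean zero with compact support, and the law of $(w,\eta)$ assigns positive probability to every set of positive Lebesgue measure. $(B^*_0)_{mn}=\frac1M\int[\sigma(w\cdot x^m+\eta)\sigma(w\cdot x^n+\eta)+c^2\sigma'(w\cdot x^m+\eta)\sigma'(w\cdot x^n+\eta)(x^m\cdot x^n+1)]\,d\mu_0(c,w,\eta)$. *)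

(* Defs.v *)
From HB Require Import structures.
From mathcomp Require Import all_boot all_order all_algebra.
From mathcomp Require Import all_classical all_reals all_analysis.
Set Implicit Arguments. Unset Strict Implicit. Unset Printing Implicit Defensive.
Import Order.TTheory GRing.Theory Num.Theory.
Local Open Scope classical_set_scope.
Local Open Scope ring_scope.

Section Defs.
Variable R : realType.

Definition dotp (d : nat) (u v : 'I_d -> R) : R := \sum_(i < d) u i * v i.

(* R^d represented as d.-tuple R (the measurable structure of the library) *)
Definition tup (d : nat) (w : d.-tuple R) : 'I_d -> R := fun i => tnth w i.

Definition box_set (d : nat) (a b : 'I_d -> R) (a0 b0 : R) : set (d.-tuple R * R) :=
  [set p | (forall i, a i <= tnth p.1 i <= b i) /\ a0 <= p.2 <= b0].
Definition box_vol (d : nat) (a b : 'I_d -> R) (a0 b0 : R) : R :=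
  (\prod_(i < d) Num.max 0 (b i - a i)) * Num.max 0 (b0 - a0).

Definition lebesgue_outer (d : nat) (A : set (d.-tuple R * R)) : \bar R :=
  ereal_inf [set s : \bar R | exists (a b : nat -> 'I_d -> R) (a0 b0 : nat -> R),
     A `<=` \bigcup_n box_set (a n) (b n) (a0 n) (b0 n) /\
     s = (\sum_(0 <= n <oo) (box_vol (a n) (b n) (a0 n) (b0 n))%:E)%E].

Definition Bstar0 (d M : nat) (sigma : R -> R) (x : 'I_M -> 'I_d -> R)
  (mu0 : probability (R * (d.-tuple R * R))%type R) : 'M[R]_M :=
  \matrix_(m < M, n < M) (M%:R^-1 *
    \int[mu0]_z (let c := z.1 in let w := tup z.2.1 in let eta := z.2.2 in
       sigma (dotp w (x m) + eta) * sigma (dotp w (x n) + eta)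
       + c ^+ 2 * (derive1 sigma) (dotp w (x m) + eta) * (derive1 sigma) (dotp w (x n) + eta)
         * (dotp (x m) (x n) + 1))).

Definition posdef (M : nat) (B : 'M[R]_M) : Prop :=
  forall v : 'cV[R]_M, v != 0 -> 0 < (v^T *m B *m v) 0 0.

End Defs.

(* Main.v *)
Require Import Defs.
From HB Require Import structures.
From mathcomp Require Import all_boot all_order all_algebra.
From mathcomp Require Import all_classical all_reals all_analysis.
Import Order.TTheory GRing.Theory Num.Theory numFieldTopology.Exports numFieldNormedType.Exports.
Local Open Scope classical_set_scope.
Local Open Scope ring_scope.
From mathcomp Require Import ring lra.
Import Order.TTheory GRing.Theory Num.Theory numFieldTopology.Exports numFieldNormedType.Exports.
Local Open Scope classical_set_scope.
Local Open Scope ring_scope.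
Section Key.
Variable R : realType.

Lemma bdd_shift (f : R -> R) (C h k : R) : (forall t, `|f t| <= C) ->
  (forall r, f (r + h) - f r = k) -> k = 0.
Proof.
move=> fC fk.
have H : forall n : nat, forall r, f (r + n%:R * h) = f r + n%:R * k.
  elim=> [|n IH] r; first by rewrite !mul0r !addr0.
  have e := fk (r + n%:R * h); rewrite IH in e.
  rewrite -natr1 !mulrDl !mul1r addrA.
  move: e; set K := n%:R * k; set K2 := n%:R * h; move=> e; lra.
apply/eqP/negPn/negP => k0.
have C0 : 0 <= C by apply: le_trans (fC 0).
have hp : 0 <= 2 * C / `|k| by rewrite divr_ge0 // mulr_ge0.
have := archi_boundP hp; set n := Num.Def.archi_bound _ => hn.
have : `|n%:R * k| <= 2 * C.
  have -> : n%:R * k = f (0 + n%:R * h) - f 0 by rewrite H addrC addKr.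
  by rewrite (le_trans (ler_normB _ _)) // mulr2n mulrDl mul1r lerD.
rewrite normrM ger0_norm // -ler_pdivlMr ?normr_gt0 //.
by rewrite leNgt hn.
Qed.


Lemma dotp0l d (y : 'I_d -> R) : dotp (fun=> 0) y = 0.
Proof. by rewrite /dotp big1 // => i _; rewrite mul0r. Qed.

Lemma dotp_shift d (w u y : 'I_d -> R) (t : R) :
  dotp (fun i => w i + t * u i) y = dotp w y + t * dotp u y.
Proof.
rewrite /dotp mulr_sumr -big_split /=; apply: eq_bigr => i _.
by rewrite mulrDl mulrA.
Qed.

Lemma dotp_sq_gt0 d (u : 'I_d -> R) (i : 'I_d) : u i != 0 -> 0 < dotp u u.
Proof.
move=> ui; rewrite /dotp (bigD1 i) //=; apply: ltr_pwDl.
  by rewrite -expr2 exprn_even_gt0 //=.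
by rewrite sumr_ge0 // => j _; rewrite -expr2 sqr_ge0.
Qed.

Lemma key d M (y : 'I_M -> 'I_d -> R) (k : 'I_M) (s : seq 'I_M) :
  forall phi : 'I_M -> R -> R,
  (forall j, exists C, forall t, `|phi j t| <= C) ->
  (forall j, j \in s -> exists i, y j i != y k i) ->
  (forall (w : 'I_d -> R) eta,
     phi k (dotp w (y k) + eta) + \sum_(j <- s) phi j (dotp w (y j) + eta) = 0) ->
  forall a b, phi k a = phi k b.
Proof.
elim: s => [|n s IH] phi Hb Hy H.
  have H0 : forall e, phi k e = 0.
    by move=> e; have := H (fun=> 0) e; rewrite big_nil addr0 dotp0l add0r.
  by move=> a b; rewrite !H0.
pose u := fun i => y k i - y n i.
pose c := fun j => dotp u (y j) - dotp u (y n).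
have cn : c n = 0 by rewrite /c subrr.
have ck : 0 < c k.
  have [i Hi] := Hy n (mem_head _ _).
  have -> : c k = dotp u u.
    rewrite /c /dotp -sumrB; apply: eq_bigr => j _; by rewrite -mulrBr.
  by apply: (@dotp_sq_gt0 _ u i); rewrite /u subr_eq0 eq_sym.
have shift0 : forall t r, phi k (r + t * c k) = phi k r.
  move=> t.
  pose psi := fun j r => phi j (r + t * c j) - phi j r.
  have Hpsi : forall a b, psi k a = psi k b.
    apply: IH.
    - move=> j; have [C HC] := Hb j; exists (C + C) => r.
      by rewrite /psi (le_trans (ler_normB _ _)) // lerD.
    - by move=> j js; apply: Hy; rewrite inE js orbT.
    move=> w eta.
    pose w' := fun i => w i + t * u i.
    pose eta' := eta - t * dotp u (y n).
    have sh : forall j, dotp w' (y j) + eta' = dotp w (y j) + eta + t * c j.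
      by move=> j; rewrite /w' dotp_shift /eta' /c mulrBr; lra.
    have E1 := H w' eta'; have E2 := H w eta.
    rewrite big_cons in E1; rewrite big_cons in E2.
    rewrite (sh k) (sh n) cn mulr0 addr0 in E1.
    have E3 : \sum_(j <- s) phi j (dotp w' (y j) + eta') =
              \sum_(j <- s) phi j (dotp w (y j) + eta + t * c j).
      by apply: eq_bigr => j _; rewrite sh.
    rewrite E3 in E1.
    rewrite /psi sumrB; lra.
  move=> r; apply/eqP; rewrite -subr_eq0; apply/eqP.
  have -> : phi k (r + t * c k) - phi k r = psi k 0 by rewrite -(Hpsi r 0).
  apply: (@bdd_shift (phi k) (sval (cid (Hb k))) (t * c k) (psi k 0)).
    exact: (svalP (cid (Hb k))).
  by move=> r'; rewrite -(Hpsi r' 0).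
move=> a b; have := shift0 ((b - a) / c k) a.
by rewrite divfK ?gt_eqF // addrC subrK => <-.
Qed.

End Key.
Section Lam.
Variable R : realType.
Local Open Scope ereal_scope.

Definition snoc {n} (p : (n.-tuple R * R)%type) : n.+1.-tuple R := [tuple of rcons p.1 p.2].

Lemma tnth_snoc n (p : (n.-tuple R * R)%type) (i : 'I_n.+1) :
  tnth (snoc p) i = if (i < n)%N then nth 0%R p.1 i else p.2.
Proof.
rewrite (tnth_nth 0%R) /= nth_rcons size_tuple.
case: ifP => // /negbT; rewrite -leqNgt => ni.
by have := ltn_ord i; rewrite ltnS => ilen; rewrite (_ : nat_of_ord i == n) //; apply/eqP/anti_leq/andP.
Qed.

Lemma measurable_snoc n : measurable_fun setT (@snoc n).
Proof.
apply/measurable_fun_tnthP => i.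
case: (ltnP i n) => Hi.
  have -> : (tnth (T:=R))^~ i \o @snoc n = (fun p => tnth p.1 (Ordinal Hi)).
    by apply: funext => p /=; rewrite tnth_snoc Hi (tnth_nth 0%R).
  exact: measurableT_comp (measurable_tnth _) measurable_fst.
have -> : (tnth (T:=R))^~ i \o @snoc n = snd.
  by apply: funext => p /=; rewrite tnth_snoc ltnNge Hi.
exact: measurable_snd.
Qed.

Fixpoint lam n : {measure set (n.-tuple R) -> \bar R} :=
  match n with
  | 0 => @dirac _ _ [tuple] R
  | n'.+1 => @measure_function_pushforward__canonical__measure_function_Measure _ _ _ _ R
        (lam n' \x lebesgue_measure) (@snoc n') (measurable_snoc n')
  end.


Definition tbox {n} (a b : 'I_n -> R) : set (n.-tuple R) :=
  [set t | forall i, (a i <= tnth t i <= b i)%R].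

Lemma measurable_tbox n (a b : 'I_n -> R) : measurable (tbox a b).
Proof.
pose F k := [set t : n.-tuple R | forall i : 'I_n, nat_of_ord i = k -> (a i <= tnth t i <= b i)%R].
have -> : tbox a b = \bigcap_k F k.
  apply/seteqP; split => t /=.
    by move=> H k _ i _; apply: H.
  by move=> H i; exact: (H (nat_of_ord i) I i erefl).
apply: bigcapT_measurable => k.
case: (ltnP k n) => Hk.
  have -> : F k = (tnth (T:=R))^~ (Ordinal Hk) @^-1` `[a (Ordinal Hk), b (Ordinal Hk)].
    apply/seteqP; split => t /=.
      by move=> H; rewrite in_itv /=; apply: H.
    rewrite in_itv /= => H i ik.
    by have -> : i = Ordinal Hk by apply: val_inj.
  rewrite -[X in measurable X]setTI.
  have mt : measurable_fun setT ((tnth (T:=R))^~ (Ordinal Hk)) := measurable_tnth _.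
  exact: (mt measurableT _ (measurable_itv _)).
have -> : F k = setT.
  apply/seteqP; split => t // _ i ik.
  by have := ltn_ord i; rewrite ik ltnNge Hk.
exact: measurableT.
Qed.

Lemma leb_cc (a b : R) : lebesgue_measure (`[a, b]%classic : set R) = (Num.max 0 (b - a))%:E.
Proof.
rewrite lebesgue_measure_itv /= lte_fin.
case: ltP => ab.
  by rewrite EFinN -EFinD max_r // subr_ge0 ltW.
by rewrite max_l // subr_le0.
Qed.

Lemma lam_box n (a b : 'I_n -> R) :
  lam n (tbox a b) = (\prod_(i < n) Num.max 0 (b i - a i))%:E.
Proof.
elim: n a b => [|n IH] a b.
  rewrite big_ord0 /= /tbox (_ : [set _ | _] = setT); last first.
    by apply/seteqP; split => // t _ [].
  by rewrite diracT.
rewrite big_ord_recr /=.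
rewrite /pushforward.
have -> : @snoc n @^-1` tbox a b =
    tbox (fun i => a (widen_ord (leqnSn n) i)) (fun i => b (widen_ord (leqnSn n) i))
    `*` `[a ord_max, b ord_max]%classic.
  apply/seteqP; split => -[t r] /=.
    move=> H; split.
      move=> i; have := H (widen_ord (leqnSn n) i).
      by rewrite tnth_snoc /= ltn_ord (tnth_nth 0%R).
    by have := H ord_max; rewrite tnth_snoc /= ltnn in_itv.
  rewrite in_itv /= => -[H1 H2] i; rewrite tnth_snoc /=.
  case: ifP => Hi.
    have := H1 (Ordinal Hi); rewrite -(tnth_nth 0%R t (Ordinal Hi)).
    by have -> : widen_ord (leqnSn n) (Ordinal Hi) = i by apply: val_inj.
  have -> : i = ord_max.
    apply: val_inj => /=; have := ltn_ord i; rewrite ltnS leq_eqVlt Hi orbF.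
    by move/eqP.
  exact: H2.
rewrite product_measure1E; last 2 first.
  exact: measurable_tbox.
  exact: measurable_itv.
by rewrite IH EFinM; congr (_ * _); exact: leb_cc.
Qed.


Definition lamT {d} : set (d.-tuple R * R) -> \bar R := (lam d \x lebesgue_measure).

Lemma box_setE d (a b : 'I_d -> R) (a0 b0 : R) :
  box_set a b a0 b0 = tbox a b `*` `[a0, b0]%classic.
Proof.
apply/seteqP; split => -[t r] /=; rewrite in_itv /=; by move=> [].
Qed.

Lemma measurable_box_set d (a b : 'I_d -> R) (a0 b0 : R) : measurable (box_set a b a0 b0).
Proof.
rewrite box_setE; apply: measurableX; first exact: measurable_tbox.
exact: measurable_itv.
Qed.

Lemma lamT_box d (a b : 'I_d -> R) (a0 b0 : R) :
  lamT (box_set a b a0 b0) = (box_vol a b a0 b0)%:E.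
Proof.
rewrite /lamT box_setE product_measure1E; last 2 first.
  exact: measurable_tbox.
  exact: measurable_itv.
by rewrite lam_box /box_vol EFinM; congr (_ * _); exact: leb_cc.
Qed.

Lemma lamT_le_outer d (B : set (d.-tuple R * R)) : measurable B ->
  lamT B <= lebesgue_outer B.
Proof.
move=> mB; apply/ereal_infP => _ [a [b [a0 [b0 [cov ->]]]]].
have := @measure_sigma_subadditive _ _ _ (lam d \x lebesgue_measure) B
  (fun n => box_set (a n) (b n) (a0 n) (b0 n)) (fun n => measurable_box_set _ _ _ _ _) mB cov.
move/le_trans; apply.
apply: lee_nneseries => [n _ _|n _]; first exact: measure_ge0.
rewrite -lamT_box. exact: le_refl.
Qed.

End Lam.
Section Gen.
Variable R : realType.

Lemma lip_cont (f : R -> R) (L : R) :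
  (forall s t, `|f s - f t| <= L * `|s - t|) -> continuous f.
Proof.
move=> Hf x; apply/cvgrPdist_le => e e0.
have L1 : 0 < `|L| + 1 by rewrite ltr_wpDl.
exists (e / (`|L| + 1)) => /=; first by rewrite divr_gt0.
move=> y /= hy.
apply: (le_trans (Hf _ _)).
apply: (le_trans (y := `|L| * `|x - y|)).
  by apply: ler_wpM2r => //; exact: ler_norm.
apply: (le_trans (y := (`|L| + 1) * `|x - y|)).
  by apply: ler_wpM2r => //; rewrite lerDl.
by rewrite -ler_pdivlMl // mulrC ltW.
Qed.

Lemma sqr_sum_eq (n : nat) (a : 'I_n -> R) :
  (\sum_(i < n) a i) ^+ 2 = \sum_(j < n) \sum_(i < n) a i * a j.
Proof.
rewrite expr2 mulr_sumr; apply: eq_bigr => j _; by rewrite mulr_suml.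
Qed.

Lemma gram_ge0 (M d : nat) (u : 'I_M -> R) (y : 'I_M -> 'I_d -> R) :
  0 <= \sum_(n < M) \sum_(m < M) u m * u n * (dotp (y m) (y n) + 1).
Proof.
have -> : \sum_(n < M) \sum_(m < M) u m * u n * (dotp (y m) (y n) + 1) =
   \sum_(i < d) (\sum_(m < M) u m * y m i) ^+ 2 + (\sum_(m < M) u m) ^+ 2.
  rewrite [X in _ = _ + X]sqr_sum_eq.
  under [X in _ = X + _]eq_bigr do rewrite sqr_sum_eq.
  rewrite [X in _ = X + _]exchange_big /= -big_split /=; apply: eq_bigr => n _.
  rewrite [X in _ = X + _]exchange_big /= -big_split /=; apply: eq_bigr => m _.
  rewrite /dotp mulrDr mulr1; congr (_ + _).
  rewrite mulr_sumr; apply: eq_bigr => i _; ring.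
apply: addr_ge0; last exact: sqr_ge0.
by apply: sumr_ge0 => i _; exact: sqr_ge0.
Qed.

Context d (T : measurableType d).

Lemma measurable_sumT (I : Type) (s : seq I) (P : pred I) (f : I -> T -> R) :
  (forall i, measurable_fun setT (f i)) ->
  measurable_fun setT (fun z => \sum_(i <- s | P i) f i z).
Proof.
move=> mf; elim: s => [|i s IH].
  by under eq_fun do rewrite big_nil; exact: measurable_cst.
under eq_fun do rewrite big_cons.
case: (P i) => //.
exact: measurable_realfun.measurable_funD.
Qed.

Variable mu : {finite_measure set T -> \bar R}.

Lemma Rintegral_sumT (I : Type) (s : seq I) (P : pred I) (f : I -> T -> R) :
  (forall i, mu.-integrable setT (EFin \o f i)) ->
  (mu.-integrable setT (EFin \o (fun z => \sum_(i <- s | P i) f i z))) /\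
  \int[mu]_z (\sum_(i <- s | P i) f i z) = \sum_(i <- s | P i) \int[mu]_z f i z.
Proof.
move=> fi; elim: s => [|i s [IH1 IH2]].
  under eq_fun do rewrite big_nil.
  rewrite big_nil; split.
    exact: (finite_measure_integrable_cst _ 0).
  by rewrite Rintegral_cst // mul0r.
under eq_fun do rewrite big_cons.
rewrite big_cons; case: (P i) => //.
set S := fun z => \sum_(j <- s | P j) f j z.
split.
  have -> : EFin \o (fun z => f i z + \sum_(j <- s | P j) f j z) =
     (EFin \o f i) \+ (EFin \o S) by apply: funext => z; rewrite /= EFinD.
  exact: integrableD.
by rewrite RintegralD // IH2.
Qed.

End Gen.

Section Main.
Import measurable_realfun.
Variable R : realType.
Variables (d M : nat).
Variable sigma : R -> R.
Variable x : 'I_M -> 'I_d -> R.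
Variable mu0 : probability (R * (d.-tuple R * R))%type R.
Variables (Cs Ls Cd Ld Kb Cx : R) (K : set R).
Hypothesis HCs : forall t, `|sigma t| <= Cs.
Hypothesis HLs : forall s t, `|sigma s - sigma t| <= Ls * `|s - t|.
Hypothesis HCd : forall t, `|derive1 sigma t| <= Cd.
Hypothesis HLd : forall s t, `|derive1 sigma s - derive1 sigma t| <= Ld * `|s - t|.
Hypothesis HCx : forall m i, `|x m i| <= Cx.
Hypothesis mK : measurable K.
Hypothesis HK1 : mu0 (K `*` setT) = 1%E.
Hypothesis HKb : forall c, K c -> `|c| <= Kb.

Local Notation T := (R * (d.-tuple R * R))%type.

Definition arg m (z : T) := dotp (tup z.2.1) (x m) + z.2.2.
Definition F m n (z : T) := sigma (arg m z) * sigma (arg n z) +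
  z.1 ^+ 2 * derive1 sigma (arg m z) * derive1 sigma (arg n z) * (dotp (x m) (x n) + 1).

Lemma BE m n : Bstar0 sigma x mu0 m n = M%:R^-1 * \int[mu0]_z (F m n z).
Proof. by rewrite mxE. Qed.

Lemma marg m : measurable_fun setT (arg m).
Proof.
apply: measurable_realfun.measurable_funD; last first.
  have h : measurable_fun setT (@snd (d.-tuple R) R \o @snd R (d.-tuple R * R)%type).
    exact: measurableT_comp measurable_snd measurable_snd.
  exact: h.
apply: measurable_sumT => i.
apply: measurable_realfun.measurable_funM; last exact: measurable_cst.
have h1 : measurable_fun setT (@fst (d.-tuple R) R \o @snd R (d.-tuple R * R)%type).
  exact: measurableT_comp measurable_fst measurable_snd.
have h2 := measurableT_comp (measurable_tnth i) h1.
exact: h2.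
Qed.

Lemma msig : measurable_fun setT sigma.
Proof. exact: measurable_realfun.continuous_measurable_fun (@lip_cont R sigma Ls HLs). Qed.
Lemma mdsig : measurable_fun setT (derive1 sigma).
Proof. exact: measurable_realfun.continuous_measurable_fun (@lip_cont R _ Ld HLd). Qed.

Lemma mcomp (f : R -> R) (g : T -> R) :
  measurable_fun setT f -> measurable_fun setT g -> measurable_fun setT (fun z => f (g z)).
Proof. move=> mf mg; exact: (measurableT_comp mf mg). Qed.

Lemma mF m n : measurable_fun setT (F m n).
Proof.
apply: measurable_realfun.measurable_funD.
  apply: measurable_realfun.measurable_funM.
    exact: mcomp msig (marg m).
  exact: mcomp msig (marg n).
apply: measurable_realfun.measurable_funM; last exact: measurable_cst.
apply: measurable_realfun.measurable_funM; last exact: mcomp mdsig (marg n).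
apply: measurable_realfun.measurable_funM; last exact: mcomp mdsig (marg m).
have h : measurable_fun setT ((fun t : R => t ^+ 2) \o @fst R (d.-tuple R * R)%type).
  exact: measurableT_comp (@measurable_realfun.exprn_measurable R setT 2) measurable_fst.
exact: h.
Qed.


Definition E : set T := K `*` setT.

Lemma mE : measurable E.
Proof. exact: measurableX mK measurableT. Qed.

Lemma nullE : mu0 (~` E) = 0%E.
Proof. by rewrite probability_setC ?HK1 ?subee //; exact: mE. Qed.

Lemma Cs0 : 0 <= Cs. Proof. exact: le_trans (HCs 0). Qed.
Lemma Cd0 : 0 <= Cd. Proof. exact: le_trans (HCd 0). Qed.

Lemma Fbound m n z : K z.1 ->
  `|F m n z| <= Cs * Cs + Kb ^+ 2 * Cd * Cd * `|dotp (x m) (x n) + 1|.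
Proof.
move=> Kz; rewrite /F; apply: (le_trans (ler_normD _ _)); apply: lerD.
  by rewrite normrM; apply: ler_pM => //.
have hK := HKb (z.1) Kz; have K0 : 0 <= Kb by exact: le_trans hK.
rewrite !normrM; apply: ler_pM => //.
rewrite expr2; apply: ler_pM; [by do 2?apply: mulr_ge0 | by [] | | exact: HCd].
apply: ler_pM; [by do 2?apply: mulr_ge0 | by [] | | exact: HCd].
by apply: ler_pM.
Qed.

Lemma intF m n : mu0.-integrable setT (EFin \o F m n).
Proof.
have mFE : measurable_fun setT (EFin \o F m n).
  by apply/measurable_realfun.measurable_EFinP; exact: mF.
apply/(negligible_integrable (measurableC mE) measurableT mFE nullE).
rewrite setTD setCK.
apply: (le_integrable mE (measurable_funTS mFE) _
  (finite_measure_integrable_cst mu0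
     (Cs * Cs + Kb ^+ 2 * Cd * Cd * `|dotp (x m) (x n) + 1|) mE)).
move=> z [Kz _] /=; rewrite lee_fin; apply: (le_trans (Fbound m n z Kz)).
exact: ler_norm.
Qed.


Definition Q (v : 'cV[R]_M) (z : T) := \sum_(n < M) \sum_(m < M) v m 0 * v n 0 * F m n z.

Lemma intterm (v : 'cV[R]_M) m n :
  mu0.-integrable setT (EFin \o (fun z => v m 0 * v n 0 * F m n z)).
Proof.
have -> : EFin \o (fun z => v m 0 * v n 0 * F m n z) =
  (fun z => (v m 0 * v n 0)%:E * (EFin \o F m n) z)%E.
  by apply: funext => z /=; rewrite EFinM.
apply: integrableZl => //; exact: intF.
Qed.

Lemma intQ (v : 'cV[R]_M) :
  mu0.-integrable setT (EFin \o Q v) /\ \int[mu0]_z (Q v z) = \sum_(n < M) \sum_(m < M) v m 0 * v n 0 * \int[mu0]_z (F m n z).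
Proof.
have inner : forall n : 'I_M,
  mu0.-integrable setT (EFin \o (fun z => \sum_(m < M) v m 0 * v n 0 * F m n z)) /\
  \int[mu0]_z (\sum_(m < M) v m 0 * v n 0 * F m n z) =
    \sum_(m < M) \int[mu0]_z (v m 0 * v n 0 * F m n z).
  move=> n.
  exact: (@Rintegral_sumT R _ _ mu0 'I_M (index_enum 'I_M) xpredT
     (fun m z => v m 0 * v n 0 * F m n z) (fun m => intterm v m n)).
have outer := (@Rintegral_sumT R _ _ mu0 'I_M (index_enum 'I_M) xpredT
     (fun n z => \sum_(m < M) v m 0 * v n 0 * F m n z) (fun n => (inner n).1)).
split; first exact: outer.1.
rewrite /Q outer.2; apply: eq_bigr => n _.
rewrite (inner n).2; apply: eq_bigr => m _.
by rewrite RintegralZl //; exact: intF.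
Qed.

Lemma quadE (v : 'cV[R]_M) :
  (v^T *m Bstar0 sigma x mu0 *m v) 0 0 = M%:R^-1 * \int[mu0]_z (Q v z).
Proof.
rewrite (intQ v).2 mulr_sumr mxE; apply: eq_bigr => n _.
rewrite mxE mulr_suml mulr_sumr; apply: eq_bigr => m _.
rewrite !mxE; ring.
Qed.


Definition gp (v : 'cV[R]_M) (p : (d.-tuple R * R)%type) :=
  \sum_(m < M) v m 0 * sigma (dotp (tup p.1) (x m) + p.2).

Lemma Qge (v : 'cV[R]_M) z : (gp v z.2) ^+ 2 <= Q v z.
Proof.
pose u := fun m => v m 0 * derive1 sigma (arg m z).
have -> : Q v z = (gp v z.2) ^+ 2 +
    z.1 ^+ 2 * \sum_(n < M) \sum_(m < M) u m * u n * (dotp (x m) (x n) + 1).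
  rewrite /Q /gp sqr_sum_eq mulr_sumr -big_split; apply: eq_bigr => n _ /=.
  rewrite mulr_sumr -big_split; apply: eq_bigr => m _ /=.
  rewrite /F /u /arg; ring.
rewrite lerDl; apply: mulr_ge0; first exact: sqr_ge0.
exact: gram_ge0.
Qed.


Hypothesis x_distinct : forall m n : 'I_M, m != n -> exists i, x m i != x n i.
Hypothesis sig_ncst : ~ (forall a b : R, sigma a = sigma b).

Lemma exists_nz (v : 'cV[R]_M) : v != 0 -> exists p, gp v p != 0.
Proof.
move=> vnz.
have [k vk] : exists k, v k 0 != 0.
  case: (pickP (fun k : 'I_M => v k 0 != 0)) => [k vk|H]; first by exists k.
  exfalso; move/negP: vnz; apply; apply/eqP/matrixP => i j.
  by rewrite (ord1 j) mxE; have := H i => /= /negbFE/eqP.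
case: (pselect (exists p, gp v p != 0)) => // Hn.
have H0 : forall p, gp v p = 0.
  by move=> p; apply/eqP; apply/negPn/negP => h; apply: Hn; exists p.
exfalso; apply: sig_ncst => a b.
have Hb : forall j : 'I_M, exists C, forall t, `|v j 0 * sigma t| <= C.
  move=> j; exists (`|v j 0| * Cs) => t; rewrite normrM.
  by apply: ler_wpM2l.
have Hy : forall j, j \in [seq j <- index_enum 'I_M | j != k] -> exists i, x j i != x k i.
  by move=> j; rewrite mem_filter => /andP[jk _]; exact: x_distinct jk.
have Hs : forall (w : 'I_d -> R) eta,
    v k 0 * sigma (dotp w (x k) + eta) +
    \sum_(j <- [seq j <- index_enum 'I_M | j != k]) v j 0 * sigma (dotp w (x j) + eta) = 0.
  move=> w eta; have := H0 ([tuple w i | i < d], eta).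
  have tw : tup [tuple w i | i < d] = w by apply: funext => i; rewrite /tup tnth_mktuple.
  by rewrite /gp /= tw (bigD1 k) //= big_filter.
have := @key R d M x k _ (fun j t => v j 0 * sigma t) Hb Hy Hs a b.
by move/(mulfI vk).
Qed.


Definition Av (v : 'cV[R]_M) := \sum_(m < M) `|v m 0| * (`|Ls| * (d%:R * `|Cx| + 1)).

Lemma arg_close (p q : (d.-tuple R * R)%type) (del : R) m : 0 <= del ->
  (forall i, `|tup q.1 i - tup p.1 i| <= del) -> `|q.2 - p.2| <= del ->
  `|(dotp (tup q.1) (x m) + q.2) - (dotp (tup p.1) (x m) + p.2)| <= del * (d%:R * `|Cx| + 1).
Proof.
move=> d0 Hw He.
have -> : (dotp (tup q.1) (x m) + q.2) - (dotp (tup p.1) (x m) + p.2) =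
   \sum_(i < d) (tup q.1 i - tup p.1 i) * x m i + (q.2 - p.2).
  have -> : \sum_(i < d) (tup q.1 i - tup p.1 i) * x m i =
     dotp (tup q.1) (x m) - dotp (tup p.1) (x m).
    by rewrite /dotp -sumrB; apply: eq_bigr => i _; rewrite mulrBl.
  ring.
apply: (le_trans (ler_normD _ _)).
rewrite mulrDr mulr1 lerD //.
apply: (le_trans (ler_norm_sum _ _ _)).
apply: (le_trans (y := \sum_(i < d) del * `|Cx|)).
  apply: ler_sum => i _; rewrite normrM; apply: ler_pM => //.
  exact: le_trans (HCx m i) (ler_norm _).
rewrite sumr_const card_ord -[X in X <= _]mulr_natl. by rewrite mulrCA.
Qed.

Lemma gp_close (v : 'cV[R]_M) (p q : (d.-tuple R * R)%type) (del : R) : 0 <= del ->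
  (forall i, `|tup q.1 i - tup p.1 i| <= del) -> `|q.2 - p.2| <= del ->
  `|gp v q - gp v p| <= del * Av v.
Proof.
move=> d0 Hw He.
rewrite /gp -sumrB; apply: (le_trans (ler_norm_sum _ _ _)).
rewrite /Av mulr_sumr; apply: ler_sum => m _.
rewrite -mulrBr normrM mulrCA; apply: ler_wpM2l => //.
apply: (le_trans (HLs _ _)).
apply: (le_trans (y := `|Ls| * `|(dotp (tup q.1) (x m) + q.2) - (dotp (tup p.1) (x m) + p.2)|)).
  by apply: ler_wpM2r => //; exact: ler_norm.
rewrite mulrCA; apply: ler_wpM2l => //.
exact: arg_close.
Qed.


Hypothesis weta_pos : forall B : set (d.-tuple R * R), measurable B ->
  (0 < lebesgue_outer B)%E -> (0 < mu0 (setT `*` B))%E.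

Lemma Av_ge0 (v : 'cV[R]_M) : 0 <= Av v.
Proof.
apply: sumr_ge0 => m _; apply: mulr_ge0 => //; try (apply: mulr_ge0 => //); try (apply: addr_ge0 => //; apply: mulr_ge0 => //).
Qed.

Lemma Qpos (v : 'cV[R]_M) : v != 0 -> 0 < \int[mu0]_z (Q v z).
Proof.
move=> vnz; have [p hp] := exists_nz v vnz.
set g0 := gp v p.
have g0pos : 0 < `|g0| by rewrite normr_gt0.
have A0 := Av_ge0 v.
pose del := `|g0| / (2 * (Av v + 1)).
have A1 : 0 < Av v + 1 by rewrite ltr_wpDl.
have del0 : 0 < del by rewrite divr_gt0 // mulr_gt0.
pose B := box_set (fun i => tup p.1 i - del) (fun i => tup p.1 i + del) (p.2 - del) (p.2 + del).
have mB : measurable B by exact: measurable_box_set.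
have close : forall q, B q -> `|g0| / 2 <= `|gp v q|.
  move=> q [Hw He].
  have := @gp_close v p q del (ltW del0).
  have Hw' : forall i, `|tup q.1 i - tup p.1 i| <= del.
    by move=> i; rewrite ler_distl; exact: Hw.
  have He' : `|q.2 - p.2| <= del by rewrite ler_distl.
  move=> /(_ Hw' He') Hc.
  have Hd : del * Av v <= `|g0| / 2.
    apply: (le_trans (y := del * (Av v + 1))).
      by apply: ler_wpM2l; [exact: ltW|rewrite lerDl].
    have -> : del * (Av v + 1) = `|g0| / 2.
      by rewrite /del; field; rewrite gt_eqF.
    by [].
  have := lerB_dist g0 (gp v q); rewrite distrC => H1.
  have H2 := le_trans H1 (le_trans Hc Hd).
  have : `|g0| - `|g0| / 2 <= `|gp v q| by lra.
  by have -> : `|g0| - `|g0| / 2 = `|g0| / 2 by field.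
have outer : (0 < lebesgue_outer B)%E.
  have Hle := @lamT_le_outer R d B mB.
  apply: (lt_le_trans _ Hle).
  rewrite /B lamT_box lte_fin /box_vol.
  have Hdd : forall a : R, Num.max 0 ((a + del) - (a - del)) = del + del.
    move=> a; have -> : (a + del) - (a - del) = del + del by ring.
    by rewrite max_r // ltW // addr_gt0.
  under eq_bigr do rewrite Hdd.
  rewrite Hdd; apply: mulr_gt0; last by rewrite addr_gt0.
  by apply: prodr_gt0 => i _; rewrite addr_gt0.
have mupos := weta_pos B mB outer.
pose S : set T := setT `*` B.
have mS : measurable S by apply: measurableX.
pose k0 := (`|g0| / 2) ^+ 2.
have k0pos : 0 < k0 by rewrite exprn_gt0 // divr_gt0.
have le : forall z, k0 * \1_S z <= Q v z.
  move=> z; rewrite indicE; case: (boolP (z \in S)) => zS.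
    rewrite mulr1; apply: (le_trans _ (Qge v z)).
    have zB : B z.2 by move: zS; rewrite inE => -[].
    have c := close _ zB.
    rewrite -real_normK ?num_real // /k0 !expr2.
    by apply: ler_pM => //; rewrite divr_ge0 // ltW.
  by rewrite mulr0; apply: (le_trans (sqr_ge0 _) (Qge v z)).
have intS : mu0.-integrable setT (EFin \o \1_S) by exact: integrable_indic.
have inth : mu0.-integrable setT (EFin \o (fun z => k0 * \1_S z)).
  have -> : EFin \o (fun z => k0 * \1_S z) = (fun z => k0%:E * (EFin \o \1_S) z)%E.
    by apply: funext => z /=; rewrite EFinM.
  by apply: integrableZl.
have := le_Rintegral measurableT inth (intQ v).1 (fun z _ => le z).
apply: lt_le_trans.
rewrite RintegralZl // /Rintegral integral_indic // setIT.
apply: mulr_gt0 => //; apply: fine_gt0; rewrite mupos /=.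
by apply: (le_lt_trans (probability_le1 _ mS)); exact: ltey.
Qed.


Hypothesis hM : (0 < M)%N.

Lemma final : posdef (Bstar0 sigma x mu0) /\
  (forall a : R, eigenvalue (Bstar0 sigma x mu0) a -> 0 < a).
Proof.
have pd : posdef (Bstar0 sigma x mu0).
  move=> v vnz; rewrite quadE; apply: mulr_gt0; first by rewrite invr_gt0 ltr0n.
  exact: Qpos.
split => // a /eigenvalueP [u Hu unz].
have unz' : u^T != 0.
  apply: contra unz => /eqP h; apply/eqP; by rewrite -(trmxK u) h trmx0.
have := pd _ unz'; rewrite trmxK Hu -scalemxAl mxE.
have s0 : 0 <= (u *m u^T) 0 0.
  rewrite mxE; apply: sumr_ge0 => j _; rewrite mxE -expr2; exact: sqr_ge0.
move=> h; rewrite ltNge; apply/negP => ha.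
have : a * (u *m u^T) 0 0 <= 0 by rewrite mulr_le0_ge0.
by rewrite leNgt h.
Qed.

End Main.

Theorem mainTheorem8 (R : realType) (d M : nat) (hd : (1 <= d)%N) (hM : (1 <= M)%N)
  (sigma : R -> R)
  (* sigma differentiable, non-polynomial, bounded, Lipschitz; sigma' bounded, Lipschitz *)
  (sigma_der : forall t : R, derivable sigma t 1)
  (sigma_nonpoly : ~ exists p : {poly R}, forall t : R, sigma t = p.[t])
  (sigma_bdd : exists C : R, forall t : R, `|sigma t| <= C)
  (sigma_lip : exists L : R, forall s t : R, `|sigma s - sigma t| <= L * `|s - t|)
  (dsigma_bdd : exists C : R, forall t : R, `|(derive1 sigma) t| <= C)
  (dsigma_lip : exists L : R, forall s t : R,
      `|(derive1 sigma) s - (derive1 sigma) t| <= L * `|s - t|)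
  (x : 'I_M -> 'I_d -> R)
  (x_nz : forall m : 'I_M, exists i : 'I_d, x m i != 0)
  (x_bdd : exists C : R, forall (m : 'I_M) (i : 'I_d), `|x m i| <= C)
  (x_lines : forall m n : 'I_M, m != n -> forall xi zeta : R,
      (forall i : 'I_d, xi * x m i = zeta * x n i) -> forall i : 'I_d, xi * x m i = 0)
  (mu0 : probability (R * (d.-tuple R * R))%type R)
  (* c independent of (w, eta) *)
  (c_indep : forall (A : set R) (B : set (d.-tuple R * R)), measurable A -> measurable B ->
      mu0 (A `*` B) = (mu0 (A `*` setT) * mu0 (setT `*` B))%E)
  (* c has mean zero *)
  (c_mean0 : (\int[mu0]_z (z.1)%:E = 0)%E)
  (* c has compact support *)
  (c_supp : exists K : set R, compact K /\ mu0 (K `*` setT) = 1%E)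
  (* the law of (w, eta) charges every set of positive Lebesgue measure *)
  (weta_pos : forall B : set (d.-tuple R * R), measurable B ->
      (0 < lebesgue_outer B)%E -> (0 < mu0 (setT `*` B))%E) :
  posdef (Bstar0 sigma x mu0) /\
  (forall a : R, eigenvalue (Bstar0 sigma x mu0) a -> 0 < a).

Proof.
have [Cs HCs] := sigma_bdd.
have [Ls HLs] := sigma_lip.
have [Cd HCd] := dsigma_bdd.
have [Ld HLd] := dsigma_lip.
have [Cx HCx] := x_bdd.
have [K [cK HK1]] := c_supp.
have mK : measurable K.
  exact: measurable_realfun.closed_measurable (compact_closed (@Rhausdorff R) cK).
have [Kb HKb] : exists Kb : R, forall c, K c -> `|c| <= Kb.
  have [M0 [_ HM0]] := compact_bounded cK.
  exists (M0 + 1) => c Kc; apply: (HM0 (M0 + 1)) => //.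
  by rewrite ltrDl.
have x_distinct : forall m n : 'I_M, m != n -> exists i, x m i != x n i.
  move=> m n mn; case: (pselect (exists i, x m i != x n i)) => // H.
  exfalso.
  have e : forall i, x m i = x n i.
    by move=> i; apply/eqP/negPn/negP => h; apply: H; exists i.
  have h : forall i, 1 * x m i = 0.
    by apply: (x_lines m n mn 1 1) => i; rewrite !mul1r e.
  have [i hi] := x_nz m.
  by move: (h i); rewrite mul1r => /eqP; rewrite (negbTE hi).
have sig_ncst : ~ (forall a b : R, sigma a = sigma b).
  move=> H; apply: sigma_nonpoly; exists (sigma 0)%:P => t.
  by rewrite hornerC (H t 0).
exact: (@final R d M sigma x mu0 Cs Ls Cd Ld Kb Cx K HCs HLs HCd HLd HCx mK HK1 HKb
  x_distinct sig_ncst weta_pos hM).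
Qed.
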